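(* Let $m$ be a stack $\mathbb T$-automaton over a finite stack alphabet $\Gamma$ and finite input alphabet $A$, with finite state set $X$. Then for every $x_0\in X$ and $\gamma_0\in\Gamma$ the language $\{w\in A^*\mid \llbracket x_0\rrbracket_m(w)(\gamma_0)=1\}$ is a real-time deterministic context-free language. Conversely, for every real-time deterministic context-free language $\mathcal L\subseteq A^*$ there exist a stack $\mathbb T$-automaton $m$ (over some finite $\Gamma$), a state $x_0$ and a symbol $\gamma_0\in\Gamma$ such that $\mathcal L=\{w\in A^*\mid \llbracket x_0\rrbracket_m(w)(\gamma_0)=1\}$.
   Context: The stack monad over $\Gamma$: $TX$ is the set of maps $p=\langle r,t\rangle:\Gamma^*\to X\times\Gamma^*$ for which there is $k$ such that $r(wu)=r(w)$ and $t(wu)=t(w)u$ for all $w\in\Gamma^k$, $u\in\Gamma^*$; unit $\eta(x)(s)=(x,s)$; Kleisli extension $f^\dagger(p)(s)=f(r(s))(t(s))$. A stack $\mathbb T$-automaton consists of a finite set $X$ and maps $o^m:X\to B$, $t^m:A\times X\to TX$, where $B$ is the set of predicates $p\in 2^{\Gamma^*}$ for which there is $k$ with $p(wu)=p(w)$ whenever $|w|\ge k$, with the $\mathbb T$-algebra structure $a^m:TB\to B$, $a^m(\langle r,t\rangle)(s)=r(s)(t(s))$. Its trace semantics $\llbracket x\rrbracket_m:A^*\to B$ is given by the generalized powerset construction: equip $B\times(TX)^A$ with the componentwise $\mathbb T$-algebra structure, let $m^\sharp:TX\to B\times(TX)^A$ be the unique $\mathbb T$-algebra morphism with $m^\sharp(\eta(x))=(o^m(x),\lambda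 a.t^m(a,x))$, and let $\llbracket x\rrbracket_m(w)=o(\partial_w(\eta(x)))$ in this coalgebra ($\partial_\epsilon=\mathrm{id}$, $\partial_{aw}=\partial_w\circ\partial_a$). Equivalently $\llbracket x\rrbracket_m(\epsilon)=o^m(x)$ and $\llbracket x\rrbracket_m(au)(s)=\llbracket y\rrbracket_m(u)(s')$ where $(y,s')=t^m(a,x)(s)$. A real-time deterministic context-free language is a language accepted (by final state) by a deterministic pushdown automaton without $\epsilon$-transitions, i.e. one with transition function $\delta:Q\times A\times\Delta\to (Q\times\Delta^* )\cup\{\bot\}$ (finite $Q,\Delta$), an initial state, an initial stack symbol and a set of final states. *)

(* Defs.v *)
From mathcomp Require Import all_boot.
Set Implicit Arguments. Unset Strict Implicit. Unset Printing Implicit Defensive.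

(* Stacks are words over Gamma, top of stack = head of the list. *)

Definition is_stack_map (G : Type) (X : Type) (p : seq G -> X * seq G) : Prop :=
  exists k : nat, forall w u : seq G, size w = k ->
    p (w ++ u) = ((p w).1, (p w).2 ++ u).

Definition stackT (G : Type) (X : Type) := { p : seq G -> X * seq G | is_stack_map p }.

Definition is_stack_pred (G : Type) (p : seq G -> bool) : Prop :=
  exists k : nat, forall w u : seq G, k <= size w -> p (w ++ u) = p w.

Definition stackB (G : Type) := { p : seq G -> bool | is_stack_pred p }.

Record stack_aut (A G X : finType) := StackAut {
  out : X -> stackB G;
  trans : A -> X -> stackT G X
}.

(* Trace semantics [[x]]_m : A^* -> B (the underlying predicate), via the
   equivalent recursive characterization. *)
Fixpoint stack_sem (A G X : finType) (m : stack_aut A G X) (x : X) (w : seq A)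
  : seq G -> bool :=
  match w with
  | [::] => sval (out m x)
  | a :: u => fun s => let ys := sval (trans m a x) s in stack_sem m ys.1 u ys.2
  end.

Record rt_dpda (A Q D : finType) := RtDpda {
  delta : Q -> A -> D -> option (Q * seq D);
  q_init : Q;
  z_init : D;
  final : Q -> bool
}.

Fixpoint dpda_run (A Q D : finType) (P : rt_dpda A Q D) (q : Q) (s : seq D)
  (w : seq A) : option (Q * seq D) :=
  match w with
  | [::] => Some (q, s)
  | a :: u =>
      match s with
      | [::] => None
      | z :: s' =>
          match delta P q a z with
          | None => None
          | Some (q', g) => dpda_run P q' (g ++ s') u
          end
      end
  end.

Definition dpda_accepts (A Q D : finType) (P : rt_dpda A Q D) (w : seq A) : bool :=
  match dpda_run P (q_init P) [:: z_init P] w with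
  | Some (q, _) => final P q
  | None => false
  end.

Definition rt_dcfl (A : finType) (L : seq A -> Prop) : Prop :=
  exists (Q D : finType) (P : rt_dpda A Q D), forall w, L w <-> dpda_accepts P w.

(* Main.v *)
Require Import Defs.
From mathcomp Require Import all_boot.
From mathcomp Require Import zify.
Set Implicit Arguments. Unset Strict Implicit. Unset Printing Implicit Defensive.

Definition dtrans (A Q D : finType) (P : rt_dpda A Q D) (a : A) (x : option Q)
  (s : seq D) : option Q * seq D :=
  match x with
  | None => (None, s)
  | Some q => match s with
              | [::] => (None, [::])
              | z :: s' => match delta P q a z with
                           | None => (None, s)
                           | Some (q', g) => (Some q', g ++ s')
                           end
              end
  end.

Lemma dtrans_map (A Q D : finType) (P : rt_dpda A Q D) a x :
  is_stack_map (dtrans P a x).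
Proof.
case: x => [q|]; last by exists 0 => w u /=.
exists 1 => [[|z [|]]] //= u _.
by case: (delta P q a z) => [[q1 g]|] //=; rewrite cats0.
Qed.

Definition dout (A Q D : finType) (P : rt_dpda A Q D) (x : option Q) : stackB D :=
  exist _ (fun _ : seq D => if x is Some q then final P q else false)
    (ex_intro _ 0 (fun _ _ _ => erefl)).

Definition daut (A Q D : finType) (P : rt_dpda A Q D) : stack_aut A D (option Q) :=
  StackAut (@dout A Q D P) (fun a x => exist _ _ (dtrans_map P a x)).

Lemma daut_dead (A Q D : finType) (P : rt_dpda A Q D) w s :
  stack_sem (daut P) None w s = false.
Proof. by elim: w s => [|a w IH] s //=. Qed.

Lemma daut_sem (A Q D : finType) (P : rt_dpda A Q D) w q s :
  stack_sem (daut P) (Some q) w s =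
  match dpda_run P q s w with Some (q', _) => final P q' | None => false end.
Proof.
elim: w q s => [|a w IH] q s //=.
case: s => [|z s'] /=; first by rewrite daut_dead.
case: (delta P q a z) => [[q' g]|] /=; first exact: IH.
by rewrite daut_dead.
Qed.

Fixpoint chunks (G : Type) (N n : nat) (r : seq G) : seq (seq G) :=
  if n is n'.+1 then take N r :: chunks N n' (drop N r) else [::].

Definition split_b (G : Type) (N : nat) (r : seq G) :=
  take (size r - (size r - N) %/ N * N) r.
Definition split_c (G : Type) (N : nat) (r : seq G) :=
  chunks N ((size r - N) %/ N) (drop (size r - (size r - N) %/ N * N) r).
Definition split_r (G : Type) (N : nat) (r : seq G) := (split_b N r, split_c N r).

Lemma chunks_ok (G : Type) N n (r : seq G) : size r = n * N ->
  flatten (chunks N n r) = r /\ all (fun c => size c == N) (chunks N n r).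
Proof.
elim: n r => [|n IH] r /=; first by rewrite mul0n => /size0nil ->.
rewrite mulSn => Hs.
have [H1 H2] := IH (drop N r) ltac:(rewrite size_drop Hs; lia).
by rewrite H1 H2 cat_take_drop size_take Hs andbT; split => //; case: ifP => // h; apply/eqP; lia.
Qed.

Lemma split_r_ok (G : Type) N (r : seq G) : 0 < N ->
  let sp := split_r N r in
  [/\ sp.1 ++ flatten sp.2 = r, all (fun c => size c == N) sp.2,
      size sp.1 < 2 * N, (sp.2 <> [::] -> N <= size sp.1)
    & (N <= size r -> N <= size sp.1)].
Proof.
move=> hN /=; rewrite /split_b /split_c.
set t := size r.
have E := divn_eq (t - N) N.
have R := ltn_pmod (t - N) hN.
set n := (t - N) %/ N in E *.
set rem := (t - N) %% N in E R.
have hle : n * N <= t by lia.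
have [H1 H2] := @chunks_ok G N n (drop (t - n * N) r) ltac:(rewrite size_drop; lia).
have sz : size (take (t - n * N) r) = t - n * N by rewrite size_takel //; lia.
split.
- by rewrite H1 cat_take_drop.
- exact: H2.
- rewrite sz. case: (leqP N t) => h; first lia.
  have : t - N = 0 by lia. move=> z. rewrite z in E. lia.
- case: n E hle H1 H2 sz => [|n'] //= E hle _ _ sz _. rewrite sz. nia.
- rewrite sz => h. lia.
Qed.

Lemma ext_map (G X : Type) (p : seq G -> X * seq G) k :
  (forall w u, size w = k -> p (w ++ u) = ((p w).1, (p w).2 ++ u)) ->
  forall w u, k <= size w -> p (w ++ u) = ((p w).1, (p w).2 ++ u).
Proof.
move=> H w u hk.
have hs : size (take k w) = k by rewrite size_takel.
by rewrite -(cat_take_drop k w) -catA !H //= catA.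
Qed.

Lemma ext_pred (G : Type) (p : seq G -> bool) k :
  (forall w u, k <= size w -> p (w ++ u) = p w) ->
  forall k', k <= k' -> forall w u, k' <= size w -> p (w ++ u) = p w.
Proof. by move=> H k' hk w u h; apply: H; lia. Qed.

Lemma uniform_bound (I : finType) (P : I -> nat -> Prop) :
  (forall i k k', k <= k' -> P i k -> P i k') -> (forall i, exists k, P i k) ->
  exists K, forall i, P i K.
Proof.
move=> mono H.
have: forall s : seq I, exists K, forall i, i \in s -> P i K.
  elim=> [|i s [K HK]]; first by exists 0.
  have [k Hk] := H i.
  exists (maxn k K) => j; rewrite in_cons => /orP [/eqP -> | Hj].
    by apply: mono Hk; apply: leq_maxl.
  by apply: mono (HK j Hj); apply: leq_maxr.
move=> /(_ (enum I)) [K HK]; exists K => i; apply: HK; by rewrite mem_enum.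
Qed.

Definition stdelta (A G X : finType) (m : stack_aut A G X) (N : nat)
  (q : X * (2 * N).-bseq G) (a : A) (d : option (N.-bseq G))
  : option ((X * (2 * N).-bseq G) * seq (option (N.-bseq G))) :=
  let full := val q.2 ++ (if d is Some c then val c else [::]) in
  let yr := sval (trans m a q.1) full in
  let sp := split_r N yr.2 in
  Some ((yr.1, insub_bseq (2 * N) sp.1),
        map (fun c => Some (insub_bseq N c)) sp.2 ++
        (if d is Some _ then [::] else [:: None])).

Definition stdpda (A G X : finType) (m : stack_aut A G X) (N : nat) (x0 : X) (g0 : G) :
  rt_dpda A (X * (2 * N).-bseq G)%type (option (N.-bseq G)) :=
  RtDpda (@stdelta A G X m N) (x0, insub_bseq (2 * N) [:: g0]) None
    (fun q => sval (out m q.1) (val q.2)).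

Lemma insub_bseqK n (T : Type) (s : seq T) : size s <= n -> val (insub_bseq n s) = s.
Proof. by move=> h; rewrite /insub_bseq insubdK. Qed.

Lemma map_insub N (G : Type) (l : seq (seq G)) :
  all (fun c => size c == N) l -> map val (map (@insub_bseq N G) l) = l.
Proof.
elim: l => [|c l IH] //= /andP [/eqP h hl].
by rewrite IH // insub_bseqK // h.
Qed.

Arguments split_b : simpl never.
Arguments split_c : simpl never.

Lemma st_main (A G X : finType) (m : stack_aut A G X) (N : nat) (x0 : X) (g0 : G) :
  0 < N ->
  (forall a x w u, N <= size w -> sval (trans m a x) (w ++ u) =
      ((sval (trans m a x) w).1, (sval (trans m a x) w).2 ++ u)) ->
  (forall x w u, N <= size w -> sval (out m x) (w ++ u) = sval (out m x) w) ->
  forall w x (b : seq G) (cs : seq (N.-bseq G)), size b < 2 * N ->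
    all (fun c : N.-bseq G => size c == N) cs -> (cs != [::] -> N <= size b) ->
  (match dpda_run (stdpda m N x0 g0) (x, insub_bseq (2 * N) b)
           (map Some cs ++ [:: None]) w with
   | Some (q, _) => sval (out m q.1) (val q.2) | None => false end)
  = stack_sem m x w (b ++ flatten (map val cs)).
Proof.
move=> hN hT hO.
elim=> [|a w IH] x b cs hb hcs hne.
- rewrite /= insub_bseqK; last lia.
  case: cs hcs hne => [|c cs] hcs hne; first by rewrite cats0.
  by rewrite hO //; apply: hne.
- case: cs hcs hne => [|c cs] hcs hne.
  + rewrite /= /stdelta /= insub_bseqK; last lia.
    rewrite !cats0.
    have [E1 E2 E3 E4 E5] := split_r_ok (sval (trans m a x) b).2 hN.
    rewrite /= in E1 E2 E3 E4 E5.
    set sb := split_b N _ in E1 E2 E3 E4 E5 *.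
    set sc := split_c N _ in E1 E2 E3 E4 E5 *.
    have -> : [seq Some (insub_bseq N c) | c <- sc] ++ [:: None] =
       map Some (map (@insub_bseq N G) sc) ++ [:: None] by rewrite -map_comp.
    rewrite IH //.
    * by rewrite map_insub // E1.
    * by rewrite all_map; apply: sub_all E2 => c /= /eqP h; rewrite insub_bseqK h.
    * by move=> h; apply: E4 => e; rewrite e in h.
  + move: hcs => /= /andP [/eqP hc hcs].
    have hbN : N <= size b by apply: hne.
    rewrite /stdelta /= insub_bseqK; last lia.
    rewrite [in RHS](catA b c) [in RHS]hT; last by rewrite size_cat; lia.
    set r := (sval (trans m a x) (b ++ c)).2.
    have hr : N <= size r.
      rewrite /r -(cat_take_drop N (b ++ c)) hT; last by rewrite size_takel // size_cat; lia.
      by rewrite /= size_cat size_drop size_cat; lia.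
    have [E1 E2 E3 E4 E5] := split_r_ok r hN.
    rewrite /= in E1 E2 E3 E4 E5.
    set sb := split_b N _ in E1 E2 E3 E4 E5 *.
    set sc := split_c N _ in E1 E2 E3 E4 E5 *.
    rewrite cats0.
    have -> : [seq Some (insub_bseq N c) | c <- sc] ++ [seq Some i | i <- cs] ++ [:: None] =
       map Some (map (@insub_bseq N G) sc ++ cs) ++ [:: None]
      by rewrite map_cat -map_comp catA.
    rewrite IH //.
    * by rewrite map_cat flatten_cat map_insub // catA E1.
    * rewrite all_cat hcs andbT all_map.
      by apply: sub_all E2 => c' /= /eqP h; rewrite insub_bseqK h.
    * by move=> _; apply: E5.
Qed.
Theorem mainTheorem5 (A : finType) :
  (forall (G X : finType) (m : stack_aut A G X) (x0 : X) (g0 : G),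
     rt_dcfl (fun w : seq A => stack_sem m x0 w [:: g0] = true))
  /\
  (forall L : seq A -> Prop, rt_dcfl L ->
     exists (G X : finType) (m : stack_aut A G X) (x0 : X) (g0 : G),
       forall w : seq A, L w <-> stack_sem m x0 w [:: g0] = true).
Proof.
split.
- move=> G X m x0 g0.
  have ex1 : forall i : A * X, exists k, forall w u, k <= size w ->
      sval (trans m i.1 i.2) (w ++ u) =
      ((sval (trans m i.1 i.2) w).1, (sval (trans m i.1 i.2) w).2 ++ u).
    by move=> i; case: (trans m i.1 i.2) => p [k Hk] /=; exists k; apply: ext_map Hk.
  have ex2 : forall x : X, exists k, forall w u, k <= size w ->
      sval (out m x) (w ++ u) = sval (out m x) w.
    by move=> x; case: (out m x) => p [k Hk] /=; exists k.
  have [K1 HK1] := uniform_bound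
    (fun i k k' hk H w u h => H w u (leq_trans hk h)) ex1.
  have [K2 HK2] := uniform_bound
    (fun i k k' hk H w u h => H w u (leq_trans hk h)) ex2.
  set N := maxn 1 (maxn K1 K2).
  have hN : 0 < N by rewrite /N; lia.
  have hT : forall a x w u, N <= size w -> sval (trans m a x) (w ++ u) =
      ((sval (trans m a x) w).1, (sval (trans m a x) w).2 ++ u).
    move=> a x w u h; apply: (HK1 (a, x)); rewrite /N in h; lia.
  have hO : forall x w u, N <= size w -> sval (out m x) (w ++ u) = sval (out m x) w.
    move=> x w u h; apply: HK2; rewrite /N in h; lia.
  exists (X * (2 * N).-bseq G)%type, (option (N.-bseq G)), (stdpda m N x0 g0) => w.
  have := @st_main A G X m N x0 g0 hN hT hO w x0 [:: g0] [::].
  rewrite /dpda_accepts /= => -> //; lia.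
- move=> L [Q [D [P HP]]].
  exists D, (option Q), (daut P), (Some (q_init P)), (z_init P) => w.
  by rewrite daut_sem HP.
Qed.
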